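(* Let $\sigma$ be a 2-structure and $X\subsetneq V(\sigma)$ with $\sigma[X]$ prime; write $\overline{X}=V(\sigma)\setminus X$. Suppose Statement (S3) holds (there is no $Y\subseteq\overline{X}$ with $|Y|=3$ and $\sigma[X\cup Y]$ prime). Let $e,f\in E(\sigma)$ be distinct and $\alpha\in X$. If the outside graph $\Gamma_{(\sigma,\overline{X})}$ has no isolated vertices, then: (1) if $\langle X\rangle^{(e,f)}_\sigma\neq\emptyset$ and $\langle X\rangle^{(f,e)}_\sigma\neq\emptyset$, then $(x,y)\in e$ and $(y,x)\in f$ for all $x\in\langle X\rangle^{(e,f)}_\sigma$ and $y\in\langle X\rangle^{(f,e)}_\sigma$; (2) if $X^{(e,f)}_\sigma(\alpha)\neq\emptyset$ and $X^{(f,e)}_\sigma(\alpha)\neq\emptyset$, then $(x,y)\in e$ and $(y,x)\in f$ for all $x\in X^{(e,f)}_\sigma(\alpha)$ and $y\in X^{(f,e)}_\sigma(\alpha)$.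
   Context: A 2-structure $\sigma$ consists of a vertex set $V(\sigma)$ and an equivalence relation $\equiv_\sigma$ on ordered pairs of distinct vertices; $E(\sigma)$ is its set of classes; $\sigma[W]$ is the induced 2-structure on $W$. A module is a set $M$ such that for all $x,y\in M$ and $v\notin M$, $(x,v)\equiv_\sigma(y,v)$ and $(v,x)\equiv_\sigma(v,y)$; $\sigma$ is prime if $|V(\sigma)|\geq3$ and its only modules are $\emptyset$, $V(\sigma)$ and singletons. Given $\sigma[X]$ prime: $\langle X\rangle_\sigma=\{v\in\overline{X}: X\text{ is a module of }\sigma[X\cup\{v\}]\}$; for $\alpha\in X$, $X_\sigma(\alpha)=\{v\in\overline{X}:\{\alpha,v\}\text{ is a module of }\sigma[X\cup\{v\}]\}$. For $e,f\in E(\sigma)$: $\langle X\rangle^{(e,f)}_\sigma=\{v\in\langle X\rangle_\sigma:(v,\beta)\in e,(\beta,v)\in f\}$ for any $\beta\in X$; $X^{(e,f)}_\sigma(\alpha)=\{v\in X_\sigma(\alpha):(v,\alpha)\in e,(\alpha,v)\in f\}$. The outside graph $\Gamma_{(\sigma,\overline{X})}$ has vertex set $\overline{X}$ and edges the 2-element sets $Y\subseteq\overline{X}$ with $\sigma[X\cup Y]$ prime. *)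

(* Defs.v *)
(* 2-structures on an arbitrary (possibly infinite) vertex type T;
   sets are predicates T -> Prop. *)
Set Implicit Arguments.

Section TwoStructures.
Variable T : Type.

(* sigma = (T, r): r is an equivalence relation on ordered pairs of distinct vertices *)
Definition is_2structure (r : T * T -> T * T -> Prop) : Prop :=
  (forall p, fst p <> snd p -> r p p) /\
  (forall p q, fst p <> snd p -> fst q <> snd q -> r p q -> r q p) /\
  (forall p q s, fst p <> snd p -> fst q <> snd q -> fst s <> snd s ->
      r p q -> r q s -> r p s).

(* e is an element of E(sigma): an equivalence class of r *)
Definition is_class (r : T * T -> T * T -> Prop) (e : T * T -> Prop) : Prop :=
  exists p, fst p <> snd p /\
    forall q, e q <-> (fst q <> snd q /\ r p q).

Definition setU (A B : T -> Prop) : T -> Prop := fun v => A v \/ B v.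
Definition set1 (a : T) : T -> Prop := fun v => v = a.
Definition set2 (a b : T) : T -> Prop := fun v => v = a \/ v = b.
Definition set3 (a b c : T) : T -> Prop := fun v => v = a \/ v = b \/ v = c.
Definition compl (A : T -> Prop) : T -> Prop := fun v => ~ A v.

(* M is a module of the induced 2-structure sigma[W] *)
Definition is_module (r : T * T -> T * T -> Prop) (W M : T -> Prop) : Prop :=
  (forall x, M x -> W x) /\
  (forall x y v, M x -> M y -> W v -> ~ M v ->
     r (x, v) (y, v) /\ r (v, x) (v, y)).

Definition is_prime (r : T * T -> T * T -> Prop) (W : T -> Prop) : Prop :=
  (exists a b c, W a /\ W b /\ W c /\ a <> b /\ a <> c /\ b <> c) /\
  (forall M, is_module r W M ->
     (forall x, ~ M x) \/ (forall x, M x <-> W x) \/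
     (exists a, forall x, M x <-> x = a)).

Definition closure (r : T * T -> T * T -> Prop) (X : T -> Prop) : T -> Prop :=
  fun v => ~ X v /\ is_module r (setU X (set1 v)) X.

Definition Xalpha (r : T * T -> T * T -> Prop) (X : T -> Prop) (alpha : T) : T -> Prop :=
  fun v => ~ X v /\ is_module r (setU X (set1 v)) (set2 alpha v).

(* <X>^(e,f)_sigma  (the condition is required for every beta in X) *)
Definition closure_ef (r : T * T -> T * T -> Prop) (X : T -> Prop)
    (e f : T * T -> Prop) : T -> Prop :=
  fun v => closure r X v /\ forall beta, X beta -> e (v, beta) /\ f (beta, v).

Definition Xalpha_ef (r : T * T -> T * T -> Prop) (X : T -> Prop)
    (e f : T * T -> Prop) (alpha : T) : T -> Prop :=
  fun v => Xalpha r X alpha v /\ e (v, alpha) /\ f (alpha, v).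

(* {v, w} is an edge of the outside graph Gamma_(sigma, Xbar) *)
Definition outside_edge (r : T * T -> T * T -> Prop) (X : T -> Prop) (v w : T) : Prop :=
  v <> w /\ ~ X v /\ ~ X w /\ is_prime r (setU X (set2 v w)).

Definition no_isolated_vertex (r : T * T -> T * T -> Prop) (X : T -> Prop) : Prop :=
  forall v, ~ X v -> exists w, outside_edge r X v w.

Definition S3 (r : T * T -> T * T -> Prop) (X : T -> Prop) : Prop :=
  ~ exists a b c, ~ X a /\ ~ X b /\ ~ X c /\ a <> b /\ a <> c /\ b <> c /\
      is_prime r (setU X (set3 a b c)).

End TwoStructures.

(* Main.v *)
Require Import Defs.
From Stdlib Require Import Classical.
Set Implicit Arguments.

Ltac mem := unfold setU, set1, set2, set3 in *;
  intuition (subst; first [congruence | tauto | auto]).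

Section S.
Variable T : Type.
Variable r : T * T -> T * T -> Prop.
Hypothesis H2 : is_2structure r.

Lemma rs a b c d : a <> b -> c <> d -> r (a,b) (c,d) -> r (c,d) (a,b).
Proof. destruct H2 as [_ [Hs _]]. intros; apply (Hs (a,b) (c,d)); auto. Qed.
Lemma rt a b c d g h : a <> b -> c <> d -> g <> h ->
  r (a,b) (c,d) -> r (c,d) (g,h) -> r (a,b) (g,h).
Proof. destruct H2 as [_ [_ Ht]]. intros; apply (Ht (a,b) (c,d) (g,h)); auto. Qed.
Lemma rr a b : a <> b -> r (a,b) (a,b).
Proof. destruct H2 as [Hr _]. intros; apply (Hr (a,b)); auto. Qed.

Lemma cls_dist e a b : is_class r e -> e (a,b) -> a <> b.
Proof. intros [p [Hp He]] H. apply He in H. exact (proj1 H). Qed.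

Lemma cls_tr e a b c d : is_class r e -> e (a,b) -> r (a,b) (c,d) -> c <> d -> e (c,d).
Proof.
  intros Hc Hab Hr Hcd. assert (nab := cls_dist Hc Hab).
  destruct Hc as [[p1 p2] [Hp He]]; simpl in Hp.
  apply He in Hab as [_ Hpab]. apply He. split; [exact Hcd|].
  eapply rt; eauto.
Qed.

Lemma cls_tr' e a b c d : is_class r e -> e (a,b) -> r (c,d) (a,b) -> c <> d -> e (c,d).
Proof.
  intros Hc Hab Hr Hcd. assert (nab := cls_dist Hc Hab).
  eapply cls_tr; eauto. apply rs; auto.
Qed.

Lemma cls_eq e f a b : is_class r e -> is_class r f -> e (a,b) -> f (a,b) ->
  forall p, e p <-> f p.
Proof.
  assert (G : forall e f c d, is_class r e -> is_class r f -> e (a,b) -> f (a,b) ->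
     e (c,d) -> f (c,d)).
  { intros e0 f0 c d Hce Hcf Ea Fa H.
    assert (ncd := cls_dist Hce H). assert (nab := cls_dist Hce Ea).
    eapply cls_tr'; [exact Hcf| exact Fa| |exact ncd].
    destruct Hce as [[p1 p2] [Hp He]]; simpl in Hp.
    apply He in H as [_ H]. apply He in Ea as [_ H'].
    apply rt with p1 p2; auto. apply rs; auto. }
  intros Hce Hcf Ea Fa [c d]. split; intro H.
  - exact (G e f c d Hce Hcf Ea Fa H).
  - exact (G f e c d Hcf Hce Fa Ea H).
Qed.

Lemma mod_ext W M N : (forall z, M z <-> N z) -> is_module r W M -> is_module r W N.
Proof.
  intros HMN [HW Hm]. split.
  - intros z Hz; apply HW, HMN, Hz.
  - intros u u' v Hu Hu' Hv Hnv. apply Hm; try apply HMN; auto.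
    intro Hc; apply Hnv, HMN, Hc.
Qed.

Lemma mod_restr W M P : is_module r W M -> (forall z, P z -> W z) ->
  is_module r P (fun z => M z /\ P z).
Proof.
  intros [HW Hm] HP. split.
  - tauto.
  - intros u u' v [Hu _] [Hu' _] Hv Hnv. apply Hm; auto; tauto.
Qed.

Lemma mod_pivot W M p : M p -> (forall z, M z -> W z) ->
  (forall u v, M u -> W v -> ~ M v -> r (u,v) (p,v) /\ r (v,u) (v,p)) ->
  is_module r W M.
Proof.
  intros Hp HW Hpiv. split; auto. intros u u' v Hu Hu' Hv Hnv.
  assert (d : forall z, M z -> z <> v) by (intros z Hz E; subst; auto).
  assert (d' : forall z, M z -> v <> z) by (intros z Hz E; subst; auto).
  destruct (Hpiv u v Hu Hv Hnv) as [A B]. destruct (Hpiv u' v Hu' Hv Hnv) as [C D].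
  split.
  - apply rt with p v; auto. apply rs; auto.
  - apply rt with v p; auto. apply rs; auto.
Qed.

Lemma prime_nt P M : is_prime r P -> is_module r P M ->
  forall a b c, M a -> M b -> a <> b -> P c -> ~ M c -> False.
Proof.
  intros [_ Hp] Hm a b c Ha Hb Hab Hc Hnc.
  destruct (Hp M Hm) as [H|[H|[z H]]].
  - eapply H; eauto.
  - apply Hnc, H, Hc.
  - apply Hab. transitivity z; [apply H|symmetry; apply H]; auto.
Qed.

Lemma third (X : T -> Prop) :
  (exists a b c, X a /\ X b /\ X c /\ a <> b /\ a <> c /\ b <> c) ->
  forall p q, exists c, X c /\ c <> p /\ c <> q.
Proof.
  intros (a&b&c&Ha&Hb&Hc&Hab&Hac&Hbc) p q.
  destruct (classic (a <> p /\ a <> q)) as [|Na]; [eauto|].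
  destruct (classic (b <> p /\ b <> q)) as [|Nb]; [eauto|].
  exists c; split; auto.
  apply not_and_or in Na; apply not_and_or in Nb.
  destruct Na as [Na|Na]; apply NNPP in Na; destruct Nb as [Nb|Nb]; apply NNPP in Nb;
    split; intro; congruence.
Qed.

Lemma key (X : T -> Prop) x y w :
  (exists a b c, X a /\ X b /\ X c /\ a <> b /\ a <> c /\ b <> c) ->
  is_prime r (setU X (set2 x w)) -> ~ is_prime r (setU X (set3 x y w)) ->
  ~ X y -> y <> x -> y <> w ->
  is_module r (setU X (set3 x y w)) (setU X (set2 x w)) \/
  exists a, setU X (set2 x w) a /\ is_module r (setU X (set3 x y w)) (set2 a y).
Proof.
  intros H3 HP HW Hy Hyx Hyw.
  set (P := setU X (set2 x w)) in *. set (W := setU X (set3 x y w)) in *.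
  assert (PW : forall z, P z -> W z) by (unfold P, W, setU, set2, set3; intros z; tauto).
  assert (WP : forall z, W z -> P z \/ z = y) by (unfold P, W, setU, set2, set3; intros z; tauto).
  assert (nPy : ~ P y) by (unfold P, setU, set2; tauto).
  assert (exM : exists M, is_module r W M /\ ~ ((forall z, ~ M z) \/
     (forall z, M z <-> W z) \/ exists a, forall z, M z <-> z = a)).
  { apply NNPP. intro N. apply HW. split.
    - destruct H3 as (a&b&c&?&?&?&?&?&?). exists a, b, c. unfold W, setU. tauto.
    - intros M HM. apply NNPP. intro N2. apply N. exists M. tauto. }
  destruct exM as [M [HM Hnt]].
  destruct (proj2 HP _ (@mod_restr W M P HM PW)) as [C|[C|[a C]]].
  - exfalso. apply Hnt. destruct (classic (M y)) as [My|My].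
    + right; right. exists y. intro z; split; [|intro; subst; auto].
      intro Mz. destruct (WP z (proj1 HM z Mz)) as [Pz|E]; auto.
      exfalso; exact (C z (conj Mz Pz)).
    + left. intros z Mz. destruct (WP z (proj1 HM z Mz)) as [Pz|E].
      * exact (C z (conj Mz Pz)).
      * subst; auto.
  - destruct (classic (M y)) as [My|My].
    + exfalso. apply Hnt. right; left. intro z; split; [apply (proj1 HM)|].
      intro Wz. destruct (WP z Wz) as [Pz|E].
      * exact (proj1 (proj2 (C z) Pz)).
      * subst; auto.
    + left. eapply mod_ext; [|exact HM]. intro z; split.
      * intro Mz. destruct (WP z (proj1 HM z Mz)) as [Pz|E]; auto. subst; contradiction.
      * intro Pz; exact (proj1 (proj2 (C z) Pz)).
  - assert (Ma : M a /\ P a) by exact (proj2 (C a) eq_refl).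
    destruct (classic (M y)) as [My|My].
    + right. exists a. split; [tauto|]. eapply mod_ext; [|exact HM]. intro z; unfold set2; split.
      * intro Mz. destruct (WP z (proj1 HM z Mz)) as [Pz|E].
        -- left; exact (proj1 (C z) (conj Mz Pz)).
        -- right; auto.
      * intros [E|E]; subst; tauto.
    + exfalso. apply Hnt. right; right. exists a. intro z; split.
      * intro Mz. apply (proj1 (C z)). split; auto.
        destruct (WP z (proj1 HM z Mz)); auto. subst; contradiction.
      * intro; subst; tauto.
Qed.

End S.

Theorem lemma3p7 (T : Type) (r : T * T -> T * T -> Prop) (X : T -> Prop)
  (e f : T * T -> Prop) (alpha : T) :
  is_2structure r ->
  (exists v, ~ X v) ->
  is_prime r X ->
  S3 r X ->
  is_class r e -> is_class r f ->
  ~ (forall p, e p <-> f p) ->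
  X alpha ->
  no_isolated_vertex r X ->
  ((exists v, closure_ef r X e f v) -> (exists v, closure_ef r X f e v) ->
     forall x y, closure_ef r X e f x -> closure_ef r X f e y ->
       e (x, y) /\ f (y, x)) /\
  ((exists v, Xalpha_ef r X e f alpha v) -> (exists v, Xalpha_ef r X f e alpha v) ->
     forall x y, Xalpha_ef r X e f alpha x -> Xalpha_ef r X f e alpha y ->
       e (x, y) /\ f (y, x)).
Proof.
  intros H2 _ HX HS3 He Hf Hef Ha Hiso.
  assert (H3 := proj1 HX).
  assert (RS : forall a b c d, a<>b -> c<>d -> r (a,b) (c,d) -> r (c,d) (a,b))
    by (intros a b c d; destruct H2 as [_ [Hs _]]; intros; apply (Hs (a,b) (c,d)); auto).
  assert (RT : forall a b c d g h, a<>b -> c<>d -> g<>h ->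
     r (a,b) (c,d) -> r (c,d) (g,h) -> r (a,b) (g,h))
    by (intros a b c d g h; destruct H2 as [_ [_ Ht]]; intros; apply (Ht (a,b) (c,d) (g,h)); auto).
  assert (RR : forall a b, a<>b -> r (a,b) (a,b)) by (intros a b; destruct H2 as [Hr _]; intros; apply (Hr (a,b)); auto).
  assert (CT : forall g a b c d, is_class r g -> g (a,b) -> r (a,b) (c,d) -> c<>d -> g (c,d))
    by (intros; eapply cls_tr; eauto).
  assert (CT' : forall g a b c d, is_class r g -> g (a,b) -> r (c,d) (a,b) -> c<>d -> g (c,d))
    by (intros; eapply cls_tr'; eauto).
  assert (ceq : forall a b, e (a,b) -> f (a,b) -> False)
    by (intros a b E F; apply Hef; eapply cls_eq; eauto).
  assert (PIV : forall W M p, M p -> (forall z, M z -> W z) ->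
    (forall u v, M u -> W v -> ~ M v -> r (u,v) (p,v) /\ r (v,u) (v,p)) ->
    is_module r W M) by (intros; eapply mod_pivot; eauto).
  assert (PNT : forall P M, is_prime r P -> is_module r P M ->
    forall a b c, M a -> M b -> a <> b -> P c -> ~ M c -> False)
    by (intros P M HP HM a b c Ma Mb nab Pc nMc; exact (prime_nt HP HM c Ma Mb nab Pc nMc)).
  destruct (third X H3 alpha alpha) as [c0 [Xc0 [nc0 _]]].
  assert (X2 : exists a b, X a /\ X b /\ a <> b)
    by (destruct H3 as (a&b&c&?&?&?&?&?&?); eauto).
  split.
  - intros _ _ x y Hx Hy.
    destruct Hx as [[nXx Mx] Hx]. destruct Hy as [[nXy My] Hy].
    assert (Mx' : forall u u', X u -> X u' -> r (u,x) (u',x) /\ r (x,u) (x,u')).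
    { intros u u' Hu Hu'. apply (proj2 Mx); mem. }
    assert (My' : forall u u', X u -> X u' -> r (u,y) (u',y) /\ r (y,u) (y,u')).
    { intros u u' Hu Hu'. apply (proj2 My); mem. }
    assert (nxy : x <> y).
    { intro E; subst y. destruct (Hx alpha Ha), (Hy alpha Ha). eapply ceq; eauto. }
    destruct (Hiso x nXx) as [w [nxw [_ [nXw Pw]]]].
    assert (nyw : y <> w).
    { intro E; subst w. destruct X2 as (a&b&Xa&Xb&nab).
      refine (PNT _ X Pw _ a b x Xa Xb nab _ _); [|mem|mem].
      apply (PIV _ _ alpha Ha); [mem|].
      intros u v Hu Hv Hnv. destruct Hv as [Hv|[Hv|Hv]]; [tauto|subst v..].
      - apply Mx'; auto.
      - apply My'; auto. }
    assert (nS : ~ is_prime r (setU X (set3 x y w))).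
    { intro Hp. apply HS3. exists x, y, w. tauto. }
    destruct (key H3 Pw nS nXy (not_eq_sym nxy) nyw) as [HM | [a [Pa HM]]].
    + destruct (proj2 HM x alpha y) as [A B]; [mem|mem|mem|mem|].
      destruct (Hy alpha Ha) as [F E]. split.
      * eapply CT'; [exact He|exact E|exact A|mem].
      * eapply CT'; [exact Hf|exact F|exact B|mem].
    + destruct Pa as [Xa | [Ea | Ea]]; [|subst a..].
      * destruct (proj2 HM a y x) as [A B]; [mem|mem|mem|mem|].
        destruct (Hx a Xa) as [E F]. split.
        -- eapply CT; [exact He|exact E|exact B|mem].
        -- eapply CT; [exact Hf|exact F|exact A|mem].
      * exfalso. destruct (proj2 HM x y alpha) as [A B]; [mem|mem|mem|mem|].
        destruct (Hx alpha Ha) as [E _]. destruct (Hy alpha Ha) as [F _].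
        apply (ceq y alpha); auto. eapply CT; [exact He|exact E|exact A|mem].
      * exfalso. destruct X2 as (a&b&Xa&Xb&nab).
        refine (PNT _ X Pw _ a b x Xa Xb nab _ _); [|mem|mem].
        apply (PIV _ _ alpha Ha); [mem|].
        intros u v Hu Hv Hnv. destruct Hv as [Hv|[Hv|Hv]]; [tauto|subst v..].
        -- apply Mx'; auto.
        -- destruct (proj2 HM w y u) as [A B]; [mem|mem|mem|mem|].
           destruct (proj2 HM w y alpha) as [A' B']; [mem|mem|mem|mem|].
           destruct (My' u alpha Hu Ha) as [C D].
           split.
           ++ apply RT with u y; [mem|mem|mem|exact B|].
              apply RT with alpha y; [mem|mem|mem|exact C|].
              apply RS; [mem|mem|exact B'].
           ++ apply RT with y u; [mem|mem|mem|exact A|].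
              apply RT with y alpha; [mem|mem|mem|exact D|].
              apply RS; [mem|mem|exact A'].
  - intros _ _ x y Hx Hy.
    destruct Hx as [[nXx Mx] [Ex Fx]]. destruct Hy as [[nXy My] [Fy Ey]].
    assert (Ax : forall v, X v -> v <> alpha -> r (x,v) (alpha,v) /\ r (v,x) (v,alpha)).
    { intros v Hv nv. apply (proj2 Mx); mem. }
    assert (Ay : forall v, X v -> v <> alpha -> r (y,v) (alpha,v) /\ r (v,y) (v,alpha)).
    { intros v Hv nv. apply (proj2 My); mem. }
    assert (nxy : x <> y).
    { intro E; subst y. eapply ceq; eauto. }
    destruct (Hiso x nXx) as [w [nxw [_ [nXw Pw]]]].
    assert (nyw : y <> w).
    { intro E; subst w.
      refine (PNT _ (set3 alpha x y) Pw _ alpha x c0 _ _ _ _ _); [|mem|mem|mem|mem|mem].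
      apply (PIV _ _ alpha); [mem|mem|].
      intros u v Hu Hv Hnv.
      assert (Xv : X v /\ v <> alpha) by mem. destruct Xv as [Xv nva].
      destruct Hu as [Hu|[Hu|Hu]]; subst u.
      - split; apply RR; mem.
      - apply Ax; auto.
      - apply Ay; auto. }
    assert (nS : ~ is_prime r (setU X (set3 x y w))).
    { intro Hp. apply HS3. exists x, y, w. tauto. }
    destruct (key H3 Pw nS nXy (not_eq_sym nxy) nyw) as [HM | [a [Pa HM]]].
    + destruct (proj2 HM x alpha y) as [A B]; [mem|mem|mem|mem|].
      split.
      * eapply CT'; [exact He|exact Ey|exact A|mem].
      * eapply CT'; [exact Hf|exact Fy|exact B|mem].
    + destruct Pa as [Xa | [Ea | Ea]]; [|subst a..].
      * destruct (classic (a = alpha)) as [Eaa|naa].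
        -- subst a. destruct (proj2 HM alpha y x) as [A B]; [mem|mem|mem|mem|].
           split.
           ++ eapply CT; [exact He|exact Ex|exact B|mem].
           ++ eapply CT; [exact Hf|exact Fx|exact A|mem].
        -- exfalso. destruct (third X H3 alpha a) as [c [Xc [nca nc]]].
           refine (PNT _ (set2 alpha a) HX _ alpha a c _ _ _ _ _); [|mem|mem|mem|mem|mem].
           apply (PIV _ _ alpha); [mem|mem|].
           intros u v Hu Hv Hnv.
           assert (nv : v <> alpha /\ v <> a) by mem. destruct nv as [nva nv].
           destruct Hu as [Hu|Hu]; subst u.
           ++ split; apply RR; mem.
           ++ destruct (proj2 HM a y v) as [A B]; [mem|mem|mem|mem|].
              destruct (Ay v Hv nva) as [C D]. split.
              ** apply RT with y v; [mem|mem|mem|exact A|exact C].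
              ** apply RT with v y; [mem|mem|mem|exact B|exact D].
      * exfalso. destruct (proj2 HM x y alpha) as [A B]; [mem|mem|mem|mem|].
        apply (ceq y alpha); auto. eapply CT; [exact He|exact Ex|exact A|mem].
      * exfalso.
        refine (PNT _ (set3 alpha x w) Pw _ alpha x c0 _ _ _ _ _); [|mem|mem|mem|mem|mem].
        apply (PIV _ _ alpha); [mem|mem|].
        intros u v Hu Hv Hnv.
        assert (Xv : X v /\ v <> alpha) by mem. destruct Xv as [Xv nva].
        destruct Hu as [Hu|[Hu|Hu]]; subst u.
        -- split; apply RR; mem.
        -- apply Ax; auto.
        -- destruct (proj2 HM w y v) as [A B]; [mem|mem|mem|mem|].
           destruct (Ay v Xv nva) as [C D]. split.
           ++ apply RT with y v; [mem|mem|mem|exact A|exact C].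
           ++ apply RT with v y; [mem|mem|mem|exact B|exact D].
Qed.
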